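(* For all $M,N\in\Lambda$: $\langle[\,],M^\bullet\rangle\to^*\underline{N}$ if and only if ($M\to_\beta^* N$ and $N\in\mathrm{NF}$). Here $[\,]$ is the trivial context consisting only of the hole.
   Context: **$\lambda$-terms and contexts.** $\Lambda$ is the set of untyped $\lambda$-terms (up to $\alpha$-equivalence). $\to_\beta^*$ is multi-step $\beta$-reduction (the reflexive–transitive closure of one-step $\beta$-reduction), and $\mathrm{NF}\subseteq\Lambda$ is the set of $\beta$-normal forms. A context $C[\,]$ is a $\lambda$-term with exactly one hole $[\,]$. $C[M]$ is the result of filling the hole with $M$; binders of $C$ may capture free variables of $M$. We write $M\,\vec N$ for $M\,N_1\cdots N_n$ (left-associated), where $n\ge 0$. **Atoms and $\Lambda^\bullet$.** For each $M\in\Lambda$ there is a new formal symbol $\underline{M}$, called an atom. Atoms are constants: they have no free variables, and substitution leaves them unchanged. For $M\in\Lambda$, $M^\bullet$ replaces each free occurrence of each variable $x$ in $M$ by the atom $\underline{x}$. Set $\Lambda^\bullet=\{M^\bullet: M\in\Lambda\}$, with substitution extended to these terms by treating atoms as constants. **The set $\Lambda^{\mathrm{rb}}$.** It is the least set such that: 1. $\underline{M}\in\Lambda^{\mathrm{rb}}$ for all $M\in\Lambda$; 2. $\langle C[\,],M\rangle\in\Lambda^{\mathrm{rb}}$ for every context $C[\,]$ and every $M\in\Lambda^\bullet$; 3. $\langle C[\,],M\,\vec N\rangle\in\Lambda^{\mathrm{rb}}$ for every context $C[\,]$, every $M\in\Lambda^{\mathrm{rb}}$ and all $N_1,\dots,N_n\in\Lambda^\bullet$.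 **The relation $\to$ on $\Lambda^{\mathrm{rb}}$.** It is the least relation satisfying: - (R1) $\langle C[\,],\underline{M}\rangle\to\underline{C[M]}$ for $M\in\Lambda$; - (R2) $\langle C[\,],\lambda x.M\rangle\to\langle C[\lambda x.[\,]],M[x:=\underline{x}]\rangle$ for $\lambda x.M\in\Lambda^\bullet$; - (R3) $\langle C[\,],\underline{M}\,N_0\,\vec N\rangle\to\langle C[\,],\langle M\,[\,],N_0\rangle\,\vec N\rangle$ for $M\in\Lambda$ and $N_0,\vec N\in\Lambda^\bullet$; - (R4) $\langle C[\,],(\lambda x.M)\,N_0\,\vec N\rangle\to\langle C[\,],M[x:=N_0]\,\vec N\rangle$ for $\lambda x.M,N_0,\vec N\in\Lambda^\bullet$; - (R5) if $M\to M'$ with $M,M'\in\Lambda^{\mathrm{rb}}$, then $\langle C[\,],M\,\vec N\rangle\to\langle C[\,],M'\,\vec N\rangle$ for every context $C[\,]$ and $\vec N\in\Lambda^\bullet$. $\to^*$ denotes the reflexive–transitive closure of $\to$. *)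

(* Defs.v *)
From Stdlib Require Import Relations List.
From mathcomp Require Import all_boot.
Set Implicit Arguments.
Unset Strict Implicit.
Unset Printing Implicit Defensive.

(* Untyped lambda-terms, locally nameless representation:             *)
(* bound variables are de Bruijn indices, free variables are names    *)
(* (natural numbers).  Lambda = locally closed terms; alpha-equivalent *)
(* terms have the same representation.                                 *)
Inductive term : Type :=
| bvar : nat -> term
| fvar : nat -> term
| app  : term -> term -> term
| lam  : term -> term.

Fixpoint closed_at (k : nat) (t : term) : bool :=
  match t with
  | bvar i => i < k
  | fvar _ => true
  | app t1 t2 => closed_at k t1 && closed_at k t2
  | lam t1 => closed_at k.+1 t1
  end.

Definition lc (t : term) : bool := closed_at 0 t.

Fixpoint open_rec (k : nat) (u t : term) : term :=
  match t with
  | bvar i => if i == k then u else bvar i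
  | fvar x => fvar x
  | app t1 t2 => app (open_rec k u t1) (open_rec k u t2)
  | lam t1 => lam (open_rec k.+1 u t1)
  end.
Definition open (t u : term) := open_rec 0 u t.

Fixpoint close_rec (k x : nat) (t : term) : term :=
  match t with
  | bvar i => bvar i
  | fvar y => if y == x then bvar k else fvar y
  | app t1 t2 => app (close_rec k x t1) (close_rec k x t2)
  | lam t1 => lam (close_rec k.+1 x t1)
  end.
(* lam_ x t  is the term  \x. t  (binding the name x) *)
Definition close (x : nat) (t : term) := close_rec 0 x t.

Fixpoint fv (t : term) : seq nat :=
  match t with
  | bvar _ => [::]
  | fvar x => [:: x]
  | app t1 t2 => fv t1 ++ fv t2
  | lam t1 => fv t1
  end.

Inductive beta : term -> term -> Prop :=
| beta_red : forall M N, lc (lam M) -> lc N -> beta (app (lam M) N) (open M N)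
| beta_appl : forall M M' N, beta M M' -> lc N -> beta (app M N) (app M' N)
| beta_appr : forall M N N', lc M -> beta N N' -> beta (app M N) (app M N')
| beta_lam : forall (L : seq nat) M M',
    (forall x, x \notin L -> beta (open M (fvar x)) (open M' (fvar x))) ->
    beta (lam M) (lam M').

Definition beta_star : term -> term -> Prop := clos_refl_trans term beta.

Definition NF (N : term) : Prop := lc N /\ ~ (exists N', beta N N').

(* Contexts: lambda-terms with exactly one hole, with NAMED binders,   *)
(* so that filling the hole captures free variables.                    *)
Inductive ctx : Type :=
| Hole : ctx
| CLam : nat -> ctx -> ctx
| CAppL : ctx -> term -> ctx
| CAppR : term -> ctx -> ctx.

Fixpoint ctx_ok (C : ctx) : bool :=
  match C with
  | Hole => true
  | CLam _ C1 => ctx_ok C1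
  | CAppL C1 N => ctx_ok C1 && lc N
  | CAppR N C1 => lc N && ctx_ok C1
  end.

Fixpoint plug (C : ctx) (M : term) : term :=
  match C with
  | Hole => M
  | CLam x C1 => lam (close x (plug C1 M))
  | CAppL C1 N => app (plug C1 M) N
  | CAppR N C1 => app N (plug C1 M)
  end.

Fixpoint ctx_fill (C D : ctx) : ctx :=
  match C with
  | Hole => D
  | CLam x C1 => CLam x (ctx_fill C1 D)
  | CAppL C1 N => CAppL (ctx_fill C1 D) N
  | CAppR N C1 => CAppR N (ctx_fill C1 D)
  end.

Fixpoint ctx_names (C : ctx) : seq nat :=
  match C with
  | Hole => [::]
  | CLam x C1 => x :: ctx_names C1
  | CAppL C1 N => ctx_names C1 ++ fv N
  | CAppR N C1 => fv N ++ ctx_names C1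
  end.

(* Expressions: one common syntax for Lambda^bullet and Lambda^rb.     *)
(*   EA M      : the atom  M_  (a constant) for M in Lambda            *)
(*   EBox C e  : the pair < C[ ], e >                                  *)
Inductive ex : Type :=
| EB : nat -> ex
| EA : term -> ex
| EApp : ex -> ex -> ex
| ELam : ex -> ex
| EBox : ctx -> ex -> ex.

Fixpoint bullet (t : term) : ex :=
  match t with
  | bvar i => EB i
  | fvar x => EA (fvar x)
  | app t1 t2 => EApp (bullet t1) (bullet t2)
  | lam t1 => ELam (bullet t1)
  end.

Definition in_bullet (e : ex) : Prop := exists M, lc M /\ e = bullet M.

Fixpoint ex_open_rec (k : nat) (u e : ex) : ex :=
  match e with
  | EB i => if i == k then u else EB i
  | EA M => EA M
  | EApp e1 e2 => EApp (ex_open_rec k u e1) (ex_open_rec k u e2)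
  | ELam e1 => ELam (ex_open_rec k.+1 u e1)
  | EBox C e1 => EBox C e1
  end.
(* for a body M of ELam M (i.e. \x.M),  ex_open M u = M[x:=u] *)
Definition ex_open (e u : ex) := ex_open_rec 0 u e.

Fixpoint ex_names (e : ex) : seq nat :=
  match e with
  | EB _ => [::]
  | EA M => fv M
  | EApp e1 e2 => ex_names e1 ++ ex_names e2
  | ELam e1 => ex_names e1
  | EBox C e1 => ctx_names C ++ ex_names e1
  end.

Definition apps (M : ex) (Ns : seq ex) : ex := foldl EApp M Ns.

Inductive rb : ex -> Prop :=
| rb_atom : forall M, lc M -> rb (EA M)
| rb_box : forall C M, ctx_ok C -> in_bullet M -> rb (EBox C M)
| rb_boxapp : forall C M Ns, ctx_ok C -> rb M -> List.Forall in_bullet Ns ->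
    rb (EBox C (apps M Ns)).

Inductive step : ex -> ex -> Prop :=
| R1 : forall C M, ctx_ok C -> lc M ->
    step (EBox C (EA M)) (EA (plug C M))
| R2 : forall C M x, ctx_ok C -> in_bullet (ELam M) ->
    (* the bound variable x is chosen fresh (Barendregt convention) *)
    x \notin ctx_names C ++ ex_names M ->
    step (EBox C (ELam M))
         (EBox (ctx_fill C (CLam x Hole)) (ex_open M (EA (fvar x))))
| R3 : forall C M N0 Ns, ctx_ok C -> lc M -> in_bullet N0 ->
    List.Forall in_bullet Ns ->
    step (EBox C (apps (EA M) (N0 :: Ns)))
         (EBox C (apps (EBox (CAppR M Hole) N0) Ns))
| R4 : forall C M N0 Ns, ctx_ok C -> in_bullet (ELam M) -> in_bullet N0 ->
    List.Forall in_bullet Ns ->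
    step (EBox C (apps (ELam M) (N0 :: Ns)))
         (EBox C (apps (ex_open M N0) Ns))
| R5 : forall C M M' Ns, rb M -> rb M' -> step M M' -> ctx_ok C ->
    List.Forall in_bullet Ns ->
    step (EBox C (apps M Ns)) (EBox C (apps M' Ns)).

Definition steps : ex -> ex -> Prop := clos_refl_trans ex step.

(* Main.v *)
From Stdlib Require Import Relations List.
From mathcomp Require Import all_boot zify.
From Stdlib Require Import Lia.
Require Import Defs.
Set Implicit Arguments.
Unset Strict Implicit.

Fixpoint subst (x : nat) (u t : term) : term :=
  match t with
  | bvar i => bvar i
  | fvar y => if y == x then u else fvar y
  | app a b => app (subst x u a) (subst x u b)
  | lam a => lam (subst x u a)
  end.

Fixpoint tsize (t : term) : nat :=
  match t with
  | bvar _ => 1 | fvar _ => 1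
  | app a b => (tsize a + tsize b).+1
  | lam a => (tsize a).+1
  end.

Lemma closed_weak t : forall k j, closed_at k t -> k <= j -> closed_at j t.
Proof.
elim: t => [i|x|a IHa b IHb|a IHa] k j //=.
- move=> H1 H2; exact: leq_trans H1 H2.
- by move=> /andP[H1 H2] H; rewrite (IHa k j H1 H) (IHb k j H2 H).
- move=> H1 H2; exact: (IHa k.+1 j.+1 H1 H2).
Qed.

Lemma open_closed t : forall k u, closed_at k t -> open_rec k u t = t.
Proof.
elim: t => [i|x|a IHa b IHb|a IHa] k u //=.
- by move=> H; case: eqP => // E; subst; rewrite ltnn in H.
- by move=> /andP[H1 H2]; rewrite IHa // IHb.
- by move=> H; rewrite IHa.
Qed.

Lemma lc_open t : forall k u, closed_at k.+1 t -> closed_at k u -> closed_at k (open_rec k u t).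
Proof.
elim: t => [i|x|a IHa b IHb|a IHa] k u //=.
- move=> H Hu; case: eqP => // /eqP Hn /=.
  by rewrite ltnS leq_eqVlt (negbTE Hn) in H.
- by move=> /andP[H1 H2] Hu; rewrite IHa // IHb.
- move=> H Hu; apply: IHa => //; exact: closed_weak Hu _.
Qed.

Lemma lc_open_rev t : forall k u, closed_at k (open_rec k u t) -> closed_at k.+1 t.
Proof.
elim: t => [i|x|a IHa b IHb|a IHa] k u //=.
- case: eqP => [->|_] //= H; exact: ltnW.
- by move=> /andP[H1 H2]; rewrite (IHa _ _ H1) (IHb _ _ H2).
- move=> H; exact: IHa H.
Qed.

Lemma lc_close t : forall k x, closed_at k t -> closed_at k.+1 (close_rec k x t).
Proof.
elim: t => [i|y|a IHa b IHb|a IHa] k x //=.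
- move=> H; exact: ltnW.
- by move=> _; case: (y == x) => //=; rewrite ltnSn.
- by move=> /andP[H1 H2]; rewrite IHa // IHb.
- move=> H; exact: IHa.
Qed.

Lemma lc_subst t : forall k x u, closed_at k t -> closed_at 0 u -> closed_at k (subst x u t).
Proof.
elim: t => [i|y|a IHa b IHb|a IHa] k x u //=.
- by case: eqP => // _ _ Hu; apply: closed_weak Hu _.
- by move=> /andP[H1 H2] Hu; rewrite IHa // IHb.
- move=> H Hu; exact: IHa.
Qed.

Lemma subst_open t : forall k x u w, closed_at 0 u ->
  subst x u (open_rec k w t) = open_rec k (subst x u w) (subst x u t).
Proof.
elim: t => [i|y|a IHa b IHb|a IHa] k x u w Hu //=.
- by case: eqP.
- case: eqP => // _; rewrite open_closed //; exact: closed_weak Hu _.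
- by rewrite IHa // IHb.
- by rewrite IHa.
Qed.

Lemma subst_intro t : forall k x u, x \notin fv t ->
  subst x u (open_rec k (fvar x) t) = open_rec k u t.
Proof.
elim: t => [i|y|a IHa b IHb|a IHa] k x u //=.
- by case: eqP => //= _; rewrite eqxx.
- by rewrite inE eq_sym => /negbTE ->.
- by rewrite mem_cat negb_or => /andP[H1 H2]; rewrite IHa // IHb.
- by move=> H; rewrite IHa.
Qed.

Lemma subst_fresh t : forall x u, x \notin fv t -> subst x u t = t.
Proof.
elim: t => [i|y|a IHa b IHb|a IHa] x u //=.
- by rewrite inE eq_sym => /negbTE ->.
- by rewrite mem_cat negb_or => /andP[H1 H2]; rewrite IHa // IHb.
- by move=> H; rewrite IHa.
Qed.

Lemma open_close_subst t : forall k x u, closed_at k t ->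
  open_rec k u (close_rec k x t) = subst x u t.
Proof.
elim: t => [i|y|a IHa b IHb|a IHa] k x u //=.
- by move=> H; case: eqP => // E; subst; rewrite ltnn in H.
- by case: eqP => //= _; rewrite eqxx.
- by move=> /andP[H1 H2]; rewrite IHa // IHb.
- by move=> H; rewrite IHa.
Qed.

Lemma close_open t : forall k x, x \notin fv t ->
  close_rec k x (open_rec k (fvar x) t) = t.
Proof.
elim: t => [i|y|a IHa b IHb|a IHa] k x //=.
- case: eqP => [->|] //=; by rewrite eqxx.
- by rewrite inE eq_sym => /negbTE ->.
- by rewrite mem_cat negb_or => /andP[H1 H2]; rewrite IHa // IHb.
- by move=> H; rewrite IHa.
Qed.

Lemma tsize_open t : forall k y, tsize (open_rec k (fvar y) t) = tsize t.
Proof.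
elim: t => [i|x|a IHa b IHb|a IHa] k y //=.
- by case: eqP.
- by rewrite IHa IHb.
- by rewrite IHa.
Qed.

Definition fresh (L : seq nat) := (sumn L).+1.

Lemma fresh_notin L : fresh L \notin L.
Proof.
have H : forall x, x \in L -> x <= sumn L.
  elim: L => // a L IH x; rewrite inE => /orP[/eqP->|H].
  - exact: leq_addr.
  - apply: leq_trans (IH _ H) _; exact: leq_addl.
apply/negP => /H; by rewrite /fresh ltnn.
Qed.

Lemma lc_lam_cof (L : seq nat) M : (forall x, x \notin L -> lc (open M (fvar x))) -> lc (lam M).
Proof. move=> H; exact: (lc_open_rev (H _ (fresh_notin L))). Qed.

Lemma beta_lc M N : beta M N -> lc M /\ lc N.
Proof.
elim => {M N}.
- rewrite /lc /= => M N H1 H2; split; first by rewrite H1.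
  exact: lc_open.
- rewrite /lc /= => M M' N _ [H1 H2] H3; by rewrite H1 H2 H3.
- rewrite /lc /= => M N N' H1 _ [H2 H3]; by rewrite H1 H2 H3.
- move=> L M M' _ IH; split; apply: (lc_lam_cof (L:=L)) => x Hx; by case: (IH x Hx).
Qed.

Lemma beta_subst M M' x u : beta M M' -> lc u -> beta (subst x u M) (subst x u M').
Proof.
move=> H Hu; elim: H => {M M'}.
- move=> M N H1 H2 /=; rewrite /open subst_open //.
  apply: beta_red; [exact: lc_subst H1 Hu | exact: lc_subst].
- move=> M M' N _ IH H /=; apply: beta_appl => //; exact: lc_subst.
- move=> M N N' H _ IH /=; apply: beta_appr => //; exact: lc_subst.
- move=> L M M' _ IH /=; apply: (beta_lam (L := x :: L)) => y.
  rewrite inE negb_or => /andP[Hyx HyL].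
  have E : forall P, open (subst x u P) (fvar y) = subst x u (open P (fvar y)).
    by move=> P; rewrite /open subst_open //= (negbTE Hyx).
  rewrite !E; exact: IH.
Qed.

Lemma beta_lam_close x A A' : beta A A' -> beta (lam (close x A)) (lam (close x A')).
Proof.
move=> H; have [HA HA'] := beta_lc H.
apply: (beta_lam (L := [::])) => y _.
rewrite /open /close !open_close_subst //; exact: beta_subst.
Qed.

Fixpoint neub (t : term) : bool :=
  match t with
  | bvar _ => true | fvar _ => true
  | app a b => neub a && nfb b
  | lam _ => false
  end
with nfb (t : term) : bool :=
  match t with
  | bvar _ => true | fvar _ => true
  | app a b => neub a && nfb b
  | lam a => nfb a
  end.

Lemma neub_nfb t : neub t -> nfb t.
Proof. by case: t. Qed.

Lemma nf_open t : forall k y, neub (open_rec k (fvar y) t) = neub t /\ nfb (open_rec k (fvar y) t) = nfb t.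
Proof.
elim: t => [i|x|a IHa b IHb|a IHa] k y //=.
- by case: eqP.
- by case: (IHa k y) => -> _; case: (IHb k y) => _ ->.
- by case: (IHa k.+1 y) => _ ->.
Qed.

Lemma nf_close t : forall k y, neub (close_rec k y t) = neub t /\ nfb (close_rec k y t) = nfb t.
Proof.
elim: t => [i|x|a IHa b IHb|a IHa] k y //=.
- by case: eqP.
- by case: (IHa k y) => -> _; case: (IHb k y) => _ ->.
- by case: (IHa k.+1 y) => _ ->.
Qed.

Lemma nfb_nobeta M M' : beta M M' -> nfb M -> False.
Proof.
elim => {M M'} //=.
- move=> M M' N _ IH _ /andP[H1 _]; exact: IH (neub_nfb H1).
- move=> M N N' _ _ IH /andP[_ H]; exact: IH.
- move=> L M M' _ IH H; apply: (IH (fresh L) (fresh_notin L)).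
  by case: (nf_open M 0 (fresh L)) => _ ->.
Qed.

Lemma NF_nfb_size n : forall N, tsize N <= n -> lc N -> ~ (exists N', beta N N') -> nfb N.
Proof.
elim: n => [|n IH] [i|x|a b|a] //=.
- move=> Hs Hlc Hn.
  have Ha : lc a by move: Hlc; rewrite /lc /= => /andP[].
  have Hb : lc b by move: Hlc; rewrite /lc /= => /andP[].
  have nfa : nfb a.
    apply: (IH a) => //; first by lia.
    by move=> [a' H]; apply: Hn; exists (app a' b); apply: beta_appl.
  have nfbb : nfb b.
    apply: (IH b) => //; first by lia.
    by move=> [b' H]; apply: Hn; exists (app a b'); apply: beta_appr.
  rewrite nfbb andbT.
  clear Hs Hlc; case: a Ha nfa Hn => //= a Ha _ Hn.
  by exfalso; apply: Hn; eexists; apply: beta_red.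
- move=> Hs Hlc Hn.
  set y := fresh (fv a).
  have Hy : y \notin fv a := fresh_notin _.
  have : nfb (open a (fvar y)).
    apply: IH; first by rewrite /open tsize_open; lia.
    - by apply: lc_open.
    - move=> [T HT]; apply: Hn; exists (lam (close y T)).
      have [_ HTl] := beta_lc HT.
      apply: (beta_lam (L := [::])) => z _.
      rewrite /open /close open_close_subst // -(subst_intro 0 (fvar z) Hy).
      exact: beta_subst.
  by case: (nf_open a 0 y) => _ ->.
Qed.

Lemma NF_nfb N : NF N -> nfb N.
Proof. move=> [H1 H2]; exact: (@NF_nfb_size (tsize N)). Qed.

Lemma nfb_NF N : lc N -> nfb N -> NF N.
Proof. move=> H1 H2; split => // [[N' H]]; exact: nfb_nobeta H H2. Qed.

Inductive whr : term -> term -> Prop :=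
| whr_beta M N : lc (lam M) -> lc N -> whr (app (lam M) N) (open M N)
| whr_app M M' N : whr M M' -> lc N -> whr (app M N) (app M' N).

Inductive whs : term -> term -> Prop :=
| whs_refl M : whs M M
| whs_step M M1 M2 : whr M M1 -> whs M1 M2 -> whs M M2.

Lemma whs_trans A B C : whs A B -> whs B C -> whs A C.
Proof. elim => // M M1 M2 H _ IH HC; exact: whs_step H (IH HC). Qed.

Lemma whr_lc M M' : whr M M' -> lc M /\ lc M'.
Proof.
elim => {M M'}.
- rewrite /lc /= => M N H1 H2; split; first by rewrite H1.
  exact: lc_open.
- rewrite /lc /= => M M' N _ [H1 H2] H3; by rewrite H1 H2 H3.
Qed.

Lemma whs_lc M M' : whs M M' -> lc M -> lc M'.
Proof. elim => // A B C H _ IH _; apply: IH; by case: (whr_lc H). Qed.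

Lemma whs_app M M' N : whs M M' -> lc N -> whs (app M N) (app M' N).
Proof. elim => [A|A B C H _ IH] HN; first exact: whs_refl. exact: whs_step (whr_app H HN) (IH HN). Qed.

Lemma whr_subst M M' x u : whr M M' -> lc u -> whr (subst x u M) (subst x u M').
Proof.
move=> H Hu; elim: H => {M M'}.
- move=> M N H1 H2 /=; rewrite /open subst_open //.
  apply: whr_beta; [exact: lc_subst H1 Hu | exact: lc_subst].
- move=> M M' N _ IH H /=; apply: whr_app => //; exact: lc_subst.
Qed.

Lemma whs_subst M M' x u : whs M M' -> lc u -> whs (subst x u M) (subst x u M').
Proof. elim => [A|A B C H _ IH] Hu; first exact: whs_refl. exact: whs_step (whr_subst x H Hu) (IH Hu). Qed.

Inductive st : term -> term -> Prop :=
| st_var M x : lc M -> whs M (fvar x) -> st M (fvar x)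
| st_app M P Q P' Q' : lc M -> whs M (app P Q) -> st P P' -> st Q Q' -> st M (app P' Q')
| st_lam (L : seq nat) M P P' : lc M -> whs M (lam P) ->
    (forall y, y \notin L -> st (open P (fvar y)) (open P' (fvar y))) -> st M (lam P').

Lemma st_lc M N : st M N -> lc M /\ lc N.
Proof.
elim => {M N}.
- by [].
- rewrite /lc => M P Q P' Q' H1 _ _ [_ H2] _ [_ H3] /=; by rewrite H1 H2 H3.
- move=> L M P P' H1 _ _ IH; split => //.
  apply: (lc_lam_cof (L := L)) => y Hy; by case: (IH y Hy).
Qed.

Lemma st_prefix M M1 N : whs M M1 -> lc M -> st M1 N -> st M N.
Proof.
move=> H HM Hs; case: Hs H => {N}.
- move=> M0 x _ H2 H; apply: st_var => //; exact: whs_trans H H2.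
- move=> M0 P Q P' Q' _ H2 H3 H4 H; apply: st_app (whs_trans H H2) H3 H4 => //.
- move=> L M0 P P' _ H2 H3 H; apply: st_lam (whs_trans H H2) H3 => //.
Qed.

Lemma st_refl_size n : forall M, tsize M <= n -> lc M -> st M M.
Proof.
elim: n => [|n IH] [i|x|a b|a] //= Hs Hlc.
- by apply: st_var => //; apply: whs_refl.
- move: (Hlc); rewrite /lc /= => /andP[Ha Hb].
  apply: st_app (whs_refl _) _ _ => //; apply: IH => //; lia.
- apply: (st_lam (L := [::])) (whs_refl _) _ => // y _.
  apply: IH; first by rewrite /open tsize_open; lia.
  exact: lc_open.
Qed.

Lemma st_refl M : lc M -> st M M.
Proof. exact: (@st_refl_size (tsize M)). Qed.

Lemma st_subst M M' x N N' : st M M' -> st N N' -> st (subst x N M) (subst x N' M').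
Proof.
move=> H HN; have [HNl HN'l] := st_lc HN.
elim: H => {M M'}.
- move=> M y HM Hw /=.
  have Hw' := whs_subst x Hw HNl.
  have HM' : lc (subst x N M) by apply: lc_subst.
  move: Hw' => /=; case: eqP => _ Hw'.
  + exact: st_prefix Hw' HM' HN.
  + exact: st_var.
- move=> M P Q P' Q' HM Hw _ IHP _ IHQ /=.
  apply: st_app IHP IHQ; first by apply: lc_subst.
  exact: (whs_subst x Hw HNl).
- move=> L M P P' HM Hw _ IH /=.
  apply: (st_lam (L := x :: L)); first by apply: lc_subst.
  + exact: (whs_subst x Hw HNl).
  + move=> y; rewrite inE negb_or => /andP[Hyx HyL].
    have E : forall U P0, lc U -> open (subst x U P0) (fvar y) = subst x U (open P0 (fvar y)).
      by move=> U P0 HU; rewrite /open subst_open //= (negbTE Hyx).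
    rewrite E // E //; exact: IH.
Qed.

Lemma st_open (L : seq nat) R R' Q Q' :
  (forall y, y \notin L -> st (open R (fvar y)) (open R' (fvar y))) -> st Q Q' ->
  st (open R Q) (open R' Q').
Proof.
move=> H HQ.
set y := fresh (L ++ fv R ++ fv R').
have : y \notin L ++ fv R ++ fv R' := fresh_notin _.
rewrite !mem_cat !negb_or => /and3P[H1 H2 H3].
rewrite /open -(subst_intro 0 Q H2) -(subst_intro 0 Q' H3).
exact: st_subst (H y H1) HQ.
Qed.

Lemma st_beta M N N' : st M N -> beta N N' -> st M N'.
Proof.
move=> H; elim: H N' => {M N}.
- by move=> M x _ _ N' Hb; inversion Hb.
- move=> M P Q P' Q' HM Hw HP IHP HQ IHQ N' Hb.
  inversion Hb; subst.
  +
    inversion HP; subst.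
    have [HQl _] := st_lc HQ.
    have HPl : lc P by case: (st_lc HP).
    have Hlam : lc (lam P0) by apply: whs_lc H2 HPl.
    apply: st_prefix (st_open H5 HQ) => //.
    apply: whs_trans Hw _.
    apply: whs_trans (whs_app H2 HQl) _.
    apply: whs_step (whr_beta Hlam HQl) (whs_refl _).
  + apply: st_app Hw _ HQ => //; apply: IHP; eassumption.
  + apply: st_app Hw HP _ => //; apply: IHQ; eassumption.
- move=> L M P P' HM Hw HP IH N' Hb.
  inversion Hb; subst.
  apply: (st_lam (L := L ++ L0)) HM Hw _ => y.
  rewrite mem_cat negb_or => /andP[H1 H2].
  exact: IH y H1 _ (H0 y H2).
Qed.

Lemma st_betas M N : beta_star M N -> lc M -> st M N.
Proof.
move=> H HM; apply clos_rt_rtn1_iff in H.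
elim: H => [|y z Hyz _ IH]; first exact: st_refl.
exact: st_beta IH Hyz.
Qed.

Lemma bullet_open t : forall k u, bullet (open_rec k u t) = ex_open_rec k (bullet u) (bullet t).
Proof.
elim: t => [i|x|a IHa b IHb|a IHa] k u //=.
- by case: eqP.
- by rewrite IHa IHb.
- by rewrite IHa.
Qed.

Lemma ex_names_bullet t : ex_names (bullet t) = fv t.
Proof. by elim: t => //= a -> b ->. Qed.

Lemma in_bullet_b t : lc t -> in_bullet (bullet t).
Proof. by move=> H; exists t. Qed.

Lemma in_bullet_lam M : in_bullet (ELam M) -> exists T, lc (lam T) /\ M = bullet T.
Proof. by case=> [[i|x|a b|T]] [H E] //; case: E => ->; exists T. Qed.

Lemma in_bullet_apps M Ns : in_bullet M -> List.Forall in_bullet Ns -> in_bullet (apps M Ns).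
Proof.
elim: Ns M => //= N Ns IH M HM HF; inversion HF; subst.
apply: IH => //.
case: HM => [T [HT ->]]; case: H1 => [U [HU ->]].
exists (app T U); split => //; by move: HT HU; by rewrite /lc /= => -> ->.
Qed.

Lemma plug_fill C D t : plug (ctx_fill C D) t = plug C (plug D t).
Proof. by elim: C => [|x C /= ->|C /= -> N|N C /= ->]. Qed.

Lemma ctx_ok_fill C D : ctx_ok C -> ctx_ok D -> ctx_ok (ctx_fill C D).
Proof.
elim: C => [//|x C IH|C IH N|N C IH] /=; first exact: IH.
- by move=> /andP[H1 H2] HD; rewrite H2 IH.
- by move=> /andP[H1 H2] HD; rewrite H1 IH.
Qed.

Lemma lc_plug C t : ctx_ok C -> lc t -> lc (plug C t).
Proof.
elim: C => [//|x C IH|C IH N|N C IH] /= HC Ht.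
- rewrite /lc /=; apply: lc_close; exact: IH.
- move: HC => /andP[H1 H2]; have := IH H1 Ht; move: H2; by rewrite /lc /= => -> ->.
- move: HC => /andP[H1 H2]; have := IH H2 Ht; move: H1; by rewrite /lc /= => -> ->.
Qed.

Lemma rb_pres a b : step a b -> rb b.
Proof.
case => {a b}.
- move=> C M HC HM; apply: rb_atom; exact: lc_plug.
- move=> C M x HC Hb _; apply: rb_box; first by apply: ctx_ok_fill.
  case: (in_bullet_lam Hb) => T [HT ->].
  have -> : EA (fvar x) = bullet (fvar x) by [].
  rewrite /ex_open -bullet_open; apply: in_bullet_b; exact: lc_open.
- move=> C M N0 Ns HC HM HN HNs; apply: rb_boxapp => //.
  apply: rb_box => //=; by rewrite HM.
- move=> C M N0 Ns HC HM HN HNs; apply: rb_box => //.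
  apply: in_bullet_apps => //.
  case: (in_bullet_lam HM) => T [HT ->]; case: HN => [U [HU ->]].
  rewrite /ex_open -bullet_open; apply: in_bullet_b; exact: lc_open.
- move=> C M M' Ns _ HM' _ HC HNs; exact: rb_boxapp.
Qed.

Lemma lift a b C Ns : steps a b -> rb a -> ctx_ok C -> List.Forall in_bullet Ns ->
  steps (EBox C (apps a Ns)) (EBox C (apps b Ns)).
Proof.
move=> H; apply clos_rt_rt1n_iff in H.
elim: H => [x|x y z Hxy _ IH] Hx HC HNs; first exact: rt_refl.
apply: rt_trans (IH (rb_pres Hxy) HC HNs).
apply: rt_step; apply: R5 => //; exact: rb_pres Hxy.
Qed.

Definition apps_t (M : term) (Ns : seq term) : term := foldl app M Ns.

Lemma whr_sim M M' : whr M M' -> forall C Qs, ctx_ok C -> List.Forall lc Qs ->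
  step (EBox C (apps (bullet M) (map bullet Qs))) (EBox C (apps (bullet M') (map bullet Qs))).
Proof.
elim => {M M'}.
- move=> M N HM HN C Qs HC HQs /=.
  rewrite /open bullet_open.
  apply: R4 => //; try by apply: in_bullet_b.
  + by exists (lam M).
  + elim: HQs => //= q qs Hq _ IH; constructor => //; exact: in_bullet_b.
- move=> M M' N _ IH HN C Qs HC HQs.
  apply: (IH C (N :: Qs) HC); by constructor.
Qed.

Lemma whs_sim M M' : whs M M' -> forall C Qs, ctx_ok C -> List.Forall lc Qs ->
  steps (EBox C (apps (bullet M) (map bullet Qs))) (EBox C (apps (bullet M') (map bullet Qs))).
Proof.
elim => [A|A B D H _ IH] C Qs HC HQs; first exact: rt_refl.
apply: rt_trans (IH C Qs HC HQs); apply: rt_step; exact: whr_sim.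
Qed.

Definition good (Q N : term) : Prop :=
  lc Q /\ lc N /\ forall C, ctx_ok C -> steps (EBox C (bullet Q)) (EA (plug C N)).

Lemma atom_loop Qs Ns : List.Forall2 good Qs Ns -> forall h C, lc h -> ctx_ok C ->
  steps (EBox C (apps (EA h) (map bullet Qs))) (EA (plug C (apps_t h Ns))).
Proof.
elim => {Qs Ns} [|Q N Qs Ns [HQ [HN HG]] HF IH] h C Hh HC /=.
- by apply: rt_step; apply: R1.
- have HFb : List.Forall in_bullet (map bullet Qs).
    elim: HF {IH} => //= q n qs ns [Hq _] _ IH2; constructor => //; exact: in_bullet_b.
  apply: rt_trans.
    apply: rt_step; apply: (@R3 C h (bullet Q) (map bullet Qs)) => //; exact: in_bullet_b.
  apply: rt_trans.
    apply: (@lift _ (EA (app h N))) => //.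
    + apply: (HG (CAppR h Hole)); by rewrite /= andbT.
    + apply: rb_box; [by rewrite /= andbT | exact: in_bullet_b].
  apply: IH => //; move: Hh HN; rewrite /lc /=; by move=> -> ->.
Qed.

Lemma complete M N : st M N ->
  (nfb N -> good M N) /\
  (neub N -> forall C Qs Ns, ctx_ok C -> List.Forall2 good Qs Ns ->
     steps (EBox C (apps (bullet M) (map bullet Qs))) (EA (plug C (apps_t N Ns)))).
Proof.
move=> H; elim: H => {M N}.
- move=> M x HM Hw.
  have H2 : forall C Qs Ns, ctx_ok C -> List.Forall2 good Qs Ns ->
     steps (EBox C (apps (bullet M) (map bullet Qs))) (EA (plug C (apps_t (fvar x) Ns))).
    move=> C Qs Ns HC HF.
    have HQs : List.Forall lc Qs by elim: HF => // q n qs ns [Hq _] _ IH; constructor.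
    apply: rt_trans (whs_sim Hw HC HQs) _.
    exact: atom_loop HF (fvar x) C isT HC.
  split => // _; split => //; split => // C HC.
  exact: (H2 C [::] [::] HC (List.Forall2_nil _)).
- move=> M P Q P' Q' HM Hw HP [_ IHP] HQ [IHQ _].
  have H2 : neub (app P' Q') -> forall C Qs Ns, ctx_ok C -> List.Forall2 good Qs Ns ->
     steps (EBox C (apps (bullet M) (map bullet Qs))) (EA (plug C (apps_t (app P' Q') Ns))).
    move=> /= /andP[H1 H3] C Qs Ns HC HF.
    have HQs : List.Forall lc Qs by elim: HF => // q n qs ns [Hq _] _ IH; constructor.
    have [HQl _] := st_lc HQ.
    apply: rt_trans (whs_sim Hw HC HQs) _.
    exact: (IHP H1 C (Q :: Qs) (Q' :: Ns) HC (List.Forall2_cons _ _ (IHQ H3) HF)).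
  split => // Hnf; split => //; split; first by case: (st_lc (st_app HM Hw HP HQ)).
  move=> C HC; exact: (H2 Hnf C [::] [::] HC (List.Forall2_nil _)).
- move=> L M P P' HM Hw HP IH; split => // Hnf.
  have Hlc := st_lc (st_lam HM Hw HP); case: Hlc => _ Hlc.
  split => //; split => // C HC.
  apply: rt_trans (whs_sim Hw HC (List.Forall_nil _) : steps _ (EBox C (bullet (lam P)))) _.
  have HPl : lc (lam P) by apply: whs_lc Hw HM.
  set x := fresh (ctx_names C ++ ex_names (bullet P) ++ L ++ fv P').
  have : x \notin ctx_names C ++ ex_names (bullet P) ++ L ++ fv P' := fresh_notin _.
  rewrite mem_cat negb_or => /andP[H1].
  rewrite mem_cat negb_or => /andP[H2].
  rewrite mem_cat negb_or => /andP[H3 H4].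
  apply: rt_trans.
    apply: rt_step; apply: (@R2 C (bullet P) x) => //; first by exists (lam P).
    by rewrite mem_cat negb_or H1 H2.
  have -> : ex_open (bullet P) (EA (fvar x)) = bullet (open P (fvar x)) by rewrite /open bullet_open.
  have -> : plug C (lam P') = plug (ctx_fill C (CLam x Hole)) (open P' (fvar x)).
    by rewrite plug_fill /= /close /open close_open.
  have [IHx _] := IH x H3.
  have Hn : nfb (open P' (fvar x)) by case: (nf_open P' 0 x) => _ ->.
  have [_ [_ G]] := IHx Hn.
  apply: G; exact: ctx_ok_fill.
Qed.

Theorem completeness M N : lc M -> beta_star M N -> NF N -> steps (EBox Hole (bullet M)) (EA N).
Proof.
move=> HM Hb HN.
have Hst := st_betas Hb HM.
have [G _] := complete Hst.
have [_ [_ G2]] := G (NF_nfb HN).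
exact: (G2 Hole isT).
Qed.

Fixpoint decode (e : ex) : term :=
  match e with
  | EB i => bvar i
  | EA t => t
  | EApp a b => app (decode a) (decode b)
  | ELam a => lam (decode a)
  | EBox C a => plug C (decode a)
  end.

Lemma decode_bullet t : decode (bullet t) = t.
Proof. by elim: t => //= [a -> b ->|a ->]. Qed.

Lemma decode_apps e Ns : decode (apps e Ns) = apps_t (decode e) (map decode Ns).
Proof. by elim: Ns e => //= N Ns IH e; rewrite IH. Qed.

Lemma bs_appl A A' B : beta_star A A' -> lc B -> beta_star (app A B) (app A' B).
Proof.
move=> H HB; elim: H => [x y H|x|x y z _ IH1 _ IH2].
- apply: rt_step; exact: beta_appl.
- exact: rt_refl.
- exact: rt_trans IH1 IH2.
Qed.

Lemma bs_appr A B B' : lc A -> beta_star B B' -> beta_star (app A B) (app A B').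
Proof.
move=> HA H; elim: H => [x y H|x|x y z _ IH1 _ IH2].
- apply: rt_step; exact: beta_appr.
- exact: rt_refl.
- exact: rt_trans IH1 IH2.
Qed.

Lemma bs_lam x A A' : beta_star A A' -> beta_star (lam (close x A)) (lam (close x A')).
Proof.
elim => [u v H|u|u v w _ IH1 _ IH2].
- apply: rt_step; exact: beta_lam_close.
- exact: rt_refl.
- exact: rt_trans IH1 IH2.
Qed.

Lemma bs_plug C A A' : ctx_ok C -> beta_star A A' -> beta_star (plug C A) (plug C A').
Proof.
elim: C => [//|x C IH|C IH N|N C IH] /= HC H.
- exact: bs_lam (IH HC H).
- move: HC => /andP[H1 H2]; exact: bs_appl (IH H1 H) H2.
- move: HC => /andP[H1 H2]; exact: bs_appr H1 (IH H2 H).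
Qed.

Lemma bs_apps A A' Ns : beta_star A A' -> List.Forall lc Ns -> beta_star (apps_t A Ns) (apps_t A' Ns).
Proof.
move=> H HF; elim: HF A A' H => //= N Ns' HN _ IH A A' H.
apply: IH; exact: bs_appl.
Qed.

Lemma decode_in_bullet e : in_bullet e -> decode e = decode e /\ lc (decode e).
Proof. by case=> T [HT ->]; rewrite decode_bullet. Qed.

Lemma lc_decode_Forall Ns : List.Forall in_bullet Ns -> List.Forall lc (map decode Ns).
Proof.
elim => //= e es He _ IH; constructor => //.
by case: (decode_in_bullet He).
Qed.

Lemma sound_step a b : step a b -> beta_star (decode a) (decode b).
Proof.
elim => {a b}.
- move=> C M _ _ /=; exact: rt_refl.
- move=> C M x HC Hb Hx /=.
  case: (in_bullet_lam Hb) => T [HT E]; subst M.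
  move: Hx; rewrite mem_cat negb_or ex_names_bullet => /andP[_ Hx].
  rewrite plug_fill /=.
  have -> : EA (fvar x) = bullet (fvar x) by [].
  rewrite /ex_open -bullet_open !decode_bullet /close close_open //.
  exact: rt_refl.
- move=> C M N0 Ns _ _ _ _ /=; rewrite !decode_apps /=; exact: rt_refl.
- move=> C M N0 Ns HC HM HN HNs /=; rewrite !decode_apps /=.
  apply: bs_plug => //; apply: bs_apps; last exact: lc_decode_Forall.
  case: (in_bullet_lam HM) => T [HT E]; subst M.
  case: HN => U [HU E]; subst N0.
  rewrite /ex_open -bullet_open !decode_bullet.
  apply: rt_step; exact: beta_red.
- move=> C M M' Ns _ _ _ IH HC HNs /=; rewrite !decode_apps.
  apply: bs_plug => //; apply: bs_apps => //; exact: lc_decode_Forall.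
Qed.

Lemma sound_steps a b : steps a b -> beta_star (decode a) (decode b).
Proof.
elim => [x y H|x|x y z _ IH1 _ IH2].
- exact: sound_step.
- exact: rt_refl.
- exact: rt_trans IH1 IH2.
Qed.

Fixpoint gctx (C : ctx) : bool :=
  match C with
  | Hole => true
  | CLam _ C1 => gctx C1
  | CAppL _ _ => false
  | CAppR N C1 => neub N && gctx C1
  end.

Definition neuctx (C : ctx) : bool :=
  match C with
  | CAppR N C1 => neub N && gctx C1
  | _ => false
  end.

Fixpoint Jh (e : ex) : bool :=
  match e with
  | EA t => neub t
  | EBox C e' => neuctx C && J e'
  | EApp a _ => Jh a
  | _ => true
  end
with J (e : ex) : bool :=
  match e with
  | EA t => nfb t
  | EBox C e' => neuctx C && J e'
  | EApp a _ => Jh a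
  | _ => true
  end.

Definition I (e : ex) : bool :=
  match e with
  | EA t => nfb t
  | EBox C e' => gctx C && J e'
  | _ => true
  end.

Lemma Jh_J e : Jh e -> J e.
Proof. case: e => //= t; exact: neub_nfb. Qed.

Lemma J_bullet t : Jh (bullet t) /\ J (bullet t).
Proof. elim: t => //= a [Ha _] b _; by rewrite Ha. Qed.

Lemma J_in_bullet e : in_bullet e -> J e.
Proof. case=> T [_ ->]; by case: (J_bullet T). Qed.

Lemma Jh_apps h Ns : Jh (apps h Ns) = Jh h.
Proof. by elim: Ns h => //= N Ns IH h; rewrite IH. Qed.

Lemma J_apps h N Ns : J (apps h (N :: Ns)) = Jh h.
Proof. by elim: Ns h N => //= N' Ns IH h N; rewrite IH. Qed.

Lemma gctx_plug C t : gctx C -> nfb t -> nfb (plug C t).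
Proof.
elim: C => [//|x C IH|C IH N|N C IH] //= HC Ht.
- by case: (nf_close (plug C t) 0 x) => _ ->; apply: IH.
- move: HC => /andP[H1 H2]; by rewrite H1 IH.
Qed.

Lemma neuctx_plug C t : neuctx C -> nfb t -> neub (plug C t).
Proof.
case: C => //= N C /andP[H1 H2] Ht; by rewrite H1 gctx_plug.
Qed.

Lemma gctx_fill C D : gctx C -> gctx D -> gctx (ctx_fill C D).
Proof.
elim: C => [//|x C IH|C IH N|N C IH] //=.
move=> /andP[H1 H2] HD; by rewrite H1 IH.
Qed.

Lemma neuctx_fill C D : neuctx C -> gctx D -> neuctx (ctx_fill C D).
Proof.
case: C => //= N C /andP[H1 H2] HD; by rewrite H1 gctx_fill.
Qed.

Lemma step_src a b : step a b -> exists C e, a = EBox C e.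
Proof. by case => *; do 2 eexists. Qed.

Lemma J_ex_open M x : in_bullet (ELam M) -> J (ex_open M (EA (fvar x))).
Proof.
move=> Hb; case: (in_bullet_lam Hb) => T [HT ->].
have -> : EA (fvar x) = bullet (fvar x) by [].
rewrite /ex_open -bullet_open; by case: (J_bullet (open_rec 0 (fvar x) T)).
Qed.

Lemma I_pres a b : step a b -> (I a -> I b) /\ (Jh a -> Jh b).
Proof.
elim => {a b}.
- move=> C M _ _ /=; split => /andP[H1 H2].
  + exact: gctx_plug.
  + exact: neuctx_plug.
- move=> C M x HC Hb _ /=; rewrite J_ex_open //; split => /andP[H1 _].
  + by rewrite gctx_fill.
  + by rewrite neuctx_fill.
- move=> C M N0 Ns _ HM HN _.
  have E : J (apps (EA M) (N0 :: Ns)) -> J (apps (EBox (CAppR M Hole) N0) Ns).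
    rewrite J_apps /= => H.
    case: Ns => [|N Ns] /=; last rewrite J_apps /=; by rewrite H J_in_bullet.
  by split => /= /andP[H1 H2]; rewrite H1 E.
- move=> C M N0 Ns _ HM HN HNs.
  have E : J (apps (ex_open M N0) Ns).
    apply: J_in_bullet; apply: in_bullet_apps => //.
    case: (in_bullet_lam HM) => T [HT ->]; case: HN => U [HU ->].
    rewrite /ex_open -bullet_open; apply: in_bullet_b; exact: lc_open.
  by split => /= /andP[H1 _]; rewrite H1 E.
- move=> C M M' Ns _ _ Hs [_ IH] _ _.
  have E : J (apps M Ns) -> J (apps M' Ns).
    case: Ns => [|N Ns] /=; last by rewrite !J_apps.
    case: (step_src Hs) => C' [e' Ee]; subst M.
    move=> H; apply: Jh_J; apply: IH; exact: H.
  by split => /= /andP[H1 H2]; rewrite H1 E.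
Qed.

Lemma I_steps a b : steps a b -> I a -> I b.
Proof.
elim => [x y H|x|x y z _ IH1 _ IH2] //.
- by case: (I_pres H).
- by move=> H; apply: IH2; apply: IH1.
Qed.

Theorem proposition7 (M N : term) :
  lc M -> lc N ->
  (steps (EBox Hole (bullet M)) (EA N) <-> (beta_star M N /\ NF N)).
Proof.
move=> HM HN; split.
- move=> H; split.
  + have := sound_steps H; by rewrite /= decode_bullet.
  + apply: nfb_NF => //.
    have := I_steps H; rewrite /=; apply.
    by case: (J_bullet M).
- move=> [Hb HNF]; exact: completeness.
Qed.
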